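(* Let $n \geq 6$ and let $K_n$ be the complete graph on $n$ vertices, viewed as an electrical network in which every edge has conductance $1$. Then the smallest number of measurements needed to solve the faulty edge detection problem on this network is exactly $\left\lceil \frac{2n}{3}\right\rceil$.
   Context: An electrical network is a graph $G=(V,E)$ with nonnegative conductances (edge weights); here all conductances equal $1$. For vertices $r,s$, the effective resistance $R_{rs}$ is the reciprocal of the net current flowing through the network when a unit voltage difference is applied between $r$ and $s$. Faulty edge detection problem: an unknown edge $e^*\in E$ has its conductance changed from $1$ to $0$ (the edge is removed). A measurement is an unordered pair $\{r,s\}$ of vertices (any pair of vertices is allowed), and it reveals the effective resistance between $r$ and $s$ in the altered network. A set $S$ of measurements solves the problem if for every two distinct edges $e\neq e'$ of $G$ there is a pair $\{r,s\}\in S$ such that the effective resistance between $r$ and $s$ in $G$ with $e$ removed differs from that in $G$ with $e'$ removed. The quantity in question is the minimum size of such a set $S$. *)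

(* Defs.v *)
From HB Require Import structures.
From mathcomp Require Import all_boot all_order all_algebra.
From Stdlib Require Import ClassicalEpsilon.
Set Implicit Arguments. Unset Strict Implicit. Unset Printing Implicit Defensive.
Import Order.TTheory GRing.Theory Num.Theory.
Local Open Scope ring_scope.

(* An electrical network on vertex set 'I_n with all conductances equal to 1
   is given by its (symmetric, irreflexive) adjacency relation [adj].
   With potential [phi], the current from v to u along an edge is phi v - phi u. *)

Definition is_potential (R : realFieldType) (n : nat) (adj : rel 'I_n)
    (r s : 'I_n) (phi : 'I_n -> R) : Prop :=
  [/\ phi r = 1, phi s = 0 &
      forall v : 'I_n, v != r -> v != s -> \sum_(u | adj v u) (phi v - phi u) = 0].

Definition net_current (R : realFieldType) (n : nat) (adj : rel 'I_n)
    (r : 'I_n) (phi : 'I_n -> R) : R :=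
  \sum_(u | adj r u) (phi r - phi u).

Arguments net_current {R n} adj r phi.
Definition eff_res (R : realFieldType) (n : nat) (adj : rel 'I_n) (r s : 'I_n) : R :=
  if r == s then 0
  else (net_current adj r
          (epsilon (inhabits (fun _ : 'I_n => (0 : R))) (is_potential adj r s)))^-1.

(* Edges of K_n: unordered pairs {u,v}, u <> v, represented as (u,v) with u < v. *)
Definition Kn_edge (n : nat) (e : 'I_n * 'I_n) : bool := (e.1 < e.2)%N.

(* Adjacency of K_n with the edge e removed (conductance set to 0). *)
Definition Kn_minus (n : nat) (e : 'I_n * 'I_n) : rel 'I_n :=
  fun u v => (u != v) && ~~ ((e == (u, v)) || (e == (v, u))).

(* A set of measurements (unordered pairs {r,s}, r <> s, represented as (r,s)
   with r < s) solves the faulty edge detection problem on K_n. *)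
Definition solves (R : realFieldType) (n : nat) (S : {set 'I_n * 'I_n}) : Prop :=
  (forall p, p \in S -> (p.1 < p.2)%N) /\
  forall e e' : 'I_n * 'I_n, Kn_edge e -> Kn_edge e' -> e != e' ->
    exists2 p, p \in S &
      @eff_res R n (Kn_minus e) p.1 p.2 != @eff_res R n (Kn_minus e') p.1 p.2.

(* Main.v *)
Require Import Defs.
From HB Require Import structures.
From mathcomp Require Import all_boot all_order all_algebra.
From mathcomp Require Import ring lra zify.
From Stdlib Require Import ClassicalEpsilon.
Set Implicit Arguments. Unset Strict Implicit. Unset Printing Implicit Defensive.
Import Order.TTheory GRing.Theory Num.Theory.

Local Open Scope ring_scope.


Ltac simpne := repeat match goal with
 | H : is_true (?x != ?y) |- context [?x == ?y] => rewrite (negbTE H)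
 | H : is_true (?x != ?y) |- context [?y == ?x] => rewrite (eq_sym y x) (negbTE H)
 end.

Ltac neqxx := match goal with H : is_true (?x != ?x) |- _ => by rewrite eqxx in H end.

Lemma sum_if1 (R : realFieldType) n (j : 'I_n) (F : 'I_n -> R) :
  \sum_i (if i == j then F i else 0) = F j.
Proof. by rewrite -big_mkcond big_pred1_eq. Qed.

Lemma sum_if0 (R : realFieldType) n (P : pred 'I_n) (F : 'I_n -> R) :
  \sum_i (if false && P i then F i else 0) = 0.
Proof. exact: big1_eq. Qed.

Lemma sum_if1t (R : realFieldType) n (j : 'I_n) (F : 'I_n -> R) :
  \sum_i (if true && (i == j) then F i else 0) = F j.
Proof. exact: sum_if1. Qed.

Lemma sum_adj (R : realFieldType) n (a b v : 'I_n) (g : 'I_n -> R) : a != b ->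
  \sum_(u | Kn_minus (a,b) v u) g u = \sum_u g u - g v
     - (if v == a then g b else if v == b then g a else 0).
Proof.
move=> ab.
have E : forall u, g u = (if Kn_minus (a,b) v u then g u else 0)
   + (if u == v then g u else 0) + (if (v == a) && (u == b) then g u else 0)
   + (if (v == b) && (u == a) then g u else 0).
  move=> u; rewrite /Kn_minus !xpair_eqE.
  have [->|uv] := eqVneq u v; rewrite ?eqxx /=.
    have [va|va] := eqVneq v a; have [vb|vb] := eqVneq v b; rewrite /= ?addr0 ?add0r //.
    by move: ab; rewrite -va -vb eqxx.
  have [va|va] := eqVneq v a; have [vb|vb] := eqVneq v b;
  have [ua|ua] := eqVneq u a; have [ub|ub] := eqVneq u b; subst;
    simpne; rewrite ?eqxx /= ?addr0 ?add0r //; simpne; rewrite ?eqxx /= ?addr0 ?add0r //.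
  all: try by rewrite eqxx in ab.
rewrite [\sum_u g u](eq_bigr _ (fun u _ => E u)) !big_split /=.
rewrite -!(big_mkcond (fun u => _ == _)) -big_mkcond big_pred1_eq /=.
have [va|va] := eqVneq v a; have [vb|vb] := eqVneq v b.
- by move: ab; rewrite -va -vb eqxx.
- rewrite /= sum_if1 big1_eq; ring.
- rewrite /= (@sum_if0 _ _ (fun i => i == b) g) sum_if1; ring.
- rewrite /= (@sum_if0 _ _ (fun i => i == b) g) ?(@sum_if0 _ _ (fun i => i == a) g); ring.
Qed.

Lemma sum_adj_edge (R : realFieldType) n (a b r o v : 'I_n) (g : 'I_n -> R) :
  (a == r) && (b == o) || (a == o) && (b == r) -> r != o ->
  \sum_(u | Kn_minus (a,b) v u) g u = \sum_u g u - g v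
     - (if v == r then g o else if v == o then g r else 0).
Proof.
case/orP => /andP[/eqP<- /eqP<-] ro; rewrite sum_adj //; last by rewrite eq_sym.
have [va|va] := eqVneq v a; have [vb|vb] := eqVneq v b => //.
by move: ro; rewrite -va -vb eqxx.
Qed.

Lemma adj_or n (a b r s m : 'I_n) : r != s -> m != r -> m != s ->
  Kn_minus (a,b) m r || Kn_minus (a,b) m s.
Proof.
move=> rs mr ms; rewrite /Kn_minus !xpair_eqE mr ms /= -negb_and.
apply/negP => /andP[/orP[]/andP[/eqP e1 /eqP e2] /orP[]/andP[/eqP e3 /eqP e4]].
all: subst; neqxx.
Qed.

Lemma maxp (R : realFieldType) n (a b r s : 'I_n) (d : 'I_n -> R) :
  r != s -> d r = 0 -> d s = 0 ->
  (forall v, v != r -> v != s -> \sum_(u | Kn_minus (a,b) v u) (d v - d u) = 0) ->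
  forall v, d v <= 0.
Proof.
move=> rs dr ds H v.
case: (@arg_maxP _ _ _ r xpredT d isT) => m _ Hm.
apply: (le_trans (Hm v isT)).
rewrite leNgt; apply/negP => dm.
have mr : m != r by apply/eqP => mr; move: dm; rewrite mr dr ltxx.
have ms : m != s by apply/eqP => ms; move: dm; rewrite ms ds ltxx.
have nn : forall u, Kn_minus (a,b) m u -> 0 <= d m - d u.
  by move=> u _; rewrite subr_ge0; exact: (Hm u isT).
have Z := psumr_eq0P nn (H m mr ms).
have /orP[A|A] := adj_or a b rs mr ms.
- by move: (Z r A) => /eqP; rewrite dr subr0 (gt_eqF dm).
- by move: (Z s A) => /eqP; rewrite ds subr0 (gt_eqF dm).
Qed.

Lemma pot_uniq (R : realFieldType) n (a b r s : 'I_n) (phi psi : 'I_n -> R) :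
  r != s -> is_potential (Kn_minus (a,b)) r s phi ->
  is_potential (Kn_minus (a,b)) r s psi -> forall v, phi v = psi v.
Proof.
move=> rs [p1 p2 p3] [q1 q2 q3].
have H : forall (f g : 'I_n -> R), f r = 1 -> f s = 0 -> g r = 1 -> g s = 0 ->
   (forall v, v != r -> v != s -> \sum_(u | Kn_minus (a,b) v u) (f v - f u) = 0) ->
   (forall v, v != r -> v != s -> \sum_(u | Kn_minus (a,b) v u) (g v - g u) = 0) ->
   forall v, f v - g v <= 0.
  move=> f g f1 f2 g1 g2 hf hg; apply: (@maxp R n a b r s (fun x => f x - g x) rs).
  - by rewrite f1 g1 subrr.
  - by rewrite f2 g2 subrr.
  move=> v vr vs.
  have -> : \sum_(u | Kn_minus (a,b) v u) (f v - g v - (f u - g u)) =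
    \sum_(u | Kn_minus (a,b) v u) (f v - f u) - \sum_(u | Kn_minus (a,b) v u) (g v - g u).
    by rewrite -sumrB; apply: eq_bigr => u _; ring.
  by rewrite hf // hg // subrr.
move=> v; apply/eqP; rewrite eq_le; apply/andP; split; rewrite -subr_le0.
- exact: (H phi psi).
- exact: (H psi phi).
Qed.

Lemma eff_res_eq (R : realFieldType) n (a b r s : 'I_n) (phi : 'I_n -> R) :
  r != s -> is_potential (Kn_minus (a,b)) r s phi ->
  eff_res R (Kn_minus (a,b)) r s = (net_current (Kn_minus (a,b)) r phi)^-1.
Proof.
move=> rs Hp; rewrite /eff_res (negbTE rs).
set psi := epsilon _ _.
have Hpsi : is_potential (Kn_minus (a,b)) r s psi.
  exact: (epsilon_spec _ _ (ex_intro _ phi Hp)).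
congr (_^-1); rewrite /net_current; apply: eq_bigr => u _.
by rewrite !(pot_uniq rs Hp Hpsi).
Qed.



Definition phi0 (R : realFieldType) n (r s : 'I_n) : 'I_n -> R :=
  fun x => if x == r then 1 else if x == s then 0 else 2^-1.
Definition phi1 (R : realFieldType) n (r s o : 'I_n) (x0 y0 : R) : 'I_n -> R :=
  fun x => if x == r then 1 else if x == s then 0 else if x == o then x0 else y0.

Lemma sum_const (R : realFieldType) n (c : R) : \sum_(u < n) c = n%:R * c.
Proof. by rewrite sumr_const card_ord mulr_natl. Qed.

Lemma sum_diff (R : realFieldType) n (f : 'I_n -> R) v :
  \sum_u (f v - f u) = n%:R * f v - \sum_u f u.
Proof. by rewrite sumrB sum_const. Qed.

Lemma sum_phi0 (R : realFieldType) n (r s : 'I_n) : r != s ->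
  \sum_u phi0 R r s u = 1 + (n%:R - 2) / 2.
Proof.
move=> rs.
have E : forall u, phi0 R r s u = 2^-1 + (if u == r then 2^-1 else 0) + (if u == s then - 2^-1 else 0).
  move=> u; rewrite /phi0; case: (u =P r) => [e|/eqP ur]; rewrite ?e; first by rewrite (negbTE rs); field.
  case: (u =P s) => [_|/eqP us]; first by field.
  by rewrite !addr0.
rewrite (eq_bigr _ (fun u _ => E u)) !big_split /= !sum_if1 sum_const; by field.
Qed.

Lemma sum_phi1 (R : realFieldType) n (r s o : 'I_n) (x y : R) : r != s -> o != r -> o != s ->
  \sum_u phi1 r s o x y u = 1 + x + (n%:R - 3) * y.
Proof.
move=> rs or os.
have E : forall u, phi1 r s o x y u = y + (if u == r then 1 - y else 0)
   + (if u == s then - y else 0) + (if u == o then x - y else 0).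
  move=> u; rewrite /phi1; case: (u =P r) => [e|/eqP ur].
    by rewrite e (negbTE rs) eq_sym (negbTE or); ring.
  case: (u =P s) => [e|/eqP us]; first by rewrite e eq_sym (negbTE os); ring.
  by case: (u =P o) => [e|/eqP uo]; rewrite ?e /=; ring.
rewrite (eq_bigr _ (fun u _ => E u)) !big_split /= !sum_if1 sum_const; ring.
Qed.

Lemma natR6 (R : realFieldType) n : (6 <= n)%N -> 6 <= (n%:R : R).
Proof. by move=> h; rewrite (ler_nat R 6 n). Qed.

Lemma pot_C2 (R : realFieldType) n (a b r s : 'I_n) : (6 <= n)%N -> r != s ->
  (a == r) && (b == s) || (a == s) && (b == r) ->
  is_potential (Kn_minus (a,b)) r s (phi0 R r s) /\
  net_current (Kn_minus (a,b)) r (phi0 R r s) = (n%:R - 2) / 2.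
Proof.
move=> n6 rs e; have N6 := natR6 R n6.
have sr : s != r by rewrite eq_sym.
split; first split.
- by rewrite /phi0 eqxx.
- by rewrite /phi0 eqxx (negbTE sr).
- move=> v vr vs; rewrite (sum_adj_edge _ _ e rs) sum_diff sum_phi0 //.
  by rewrite /phi0 (negbTE vr) (negbTE vs); field.
- rewrite /net_current (sum_adj_edge _ _ e rs) sum_diff sum_phi0 //.
  by rewrite /phi0 !eqxx (negbTE sr); field.
Qed.

Lemma pot_C0 (R : realFieldType) n (a b r s : 'I_n) : (6 <= n)%N -> r != s -> a != b ->
  a != r -> a != s -> b != r -> b != s ->
  is_potential (Kn_minus (a,b)) r s (phi0 R r s) /\
  net_current (Kn_minus (a,b)) r (phi0 R r s) = n%:R / 2.
Proof.
move=> n6 rs ab ar as_ br bs; have N6 := natR6 R n6.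
have sr : s != r by rewrite eq_sym.
have pa : phi0 R r s a = 2^-1 by rewrite /phi0 (negbTE ar) (negbTE as_).
have pb : phi0 R r s b = 2^-1 by rewrite /phi0 (negbTE br) (negbTE bs).
split; first split.
- by rewrite /phi0 eqxx.
- by rewrite /phi0 eqxx (negbTE sr).
- move=> v vr vs; rewrite sum_adj // sum_diff sum_phi0 // pa pb.
  have pv : phi0 R r s v = 2^-1 by rewrite /phi0 (negbTE vr) (negbTE vs).
  rewrite pv subrr; case: ifP => _; [|case: ifP => _]; by field.
- rewrite /net_current sum_adj // sum_diff sum_phi0 //.
  rewrite eq_sym (negbTE ar) eq_sym (negbTE br).
  by rewrite /phi0 !eqxx; field.
Qed.

Lemma pot_C1r (R : realFieldType) n (a b r s o : 'I_n) : (6 <= n)%N -> r != s ->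
  (a == r) && (b == o) || (a == o) && (b == r) -> o != r -> o != s ->
  let N := (n%:R : R) in
  let phi := phi1 r s o ((N - 3) / (2 * N - 3)) ((N - 2) / (2 * N - 3)) in
  is_potential (Kn_minus (a,b)) r s phi /\
  net_current (Kn_minus (a,b)) r phi = N * (N - 2) / (2 * N - 3).
Proof.
move=> n6 rs e or os N phi; have N6 : 6 <= N := natR6 R n6.
have sr : s != r by rewrite eq_sym.
have ro : r != o by rewrite eq_sym.
have D : 2 * N - 3 != 0 by apply/eqP; lra.
split; first split.
- by rewrite /phi /phi1 eqxx.
- by rewrite /phi /phi1 eqxx (negbTE sr).
- move=> v vr vs; rewrite (sum_adj_edge _ _ e ro) sum_diff sum_phi1 // (negbTE vr).
  case: (v =P o) => [->|/eqP vo].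
    by rewrite /phi /phi1 !eqxx (negbTE or) (negbTE os); field.
  by rewrite /phi /phi1 (negbTE vr) (negbTE vs) (negbTE vo); field.
- rewrite /net_current (sum_adj_edge _ _ e ro) sum_diff sum_phi1 // eqxx.
  by rewrite /phi /phi1 !eqxx (negbTE or) (negbTE os); field.
Qed.

Lemma pot_C1s (R : realFieldType) n (a b r s o : 'I_n) : (6 <= n)%N -> r != s ->
  (a == s) && (b == o) || (a == o) && (b == s) -> o != r -> o != s ->
  let N := (n%:R : R) in
  let phi := phi1 r s o (N / (2 * N - 3)) ((N - 1) / (2 * N - 3)) in
  is_potential (Kn_minus (a,b)) r s phi /\
  net_current (Kn_minus (a,b)) r phi = N * (N - 2) / (2 * N - 3).
Proof.
move=> n6 rs e or os N phi; have N6 : 6 <= N := natR6 R n6.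
have sr : s != r by rewrite eq_sym.
have so : s != o by rewrite eq_sym.
have D : 2 * N - 3 != 0 by apply/eqP; lra.
split; first split.
- by rewrite /phi /phi1 eqxx.
- by rewrite /phi /phi1 eqxx (negbTE sr).
- move=> v vr vs; rewrite (sum_adj_edge _ _ e so) sum_diff sum_phi1 // (negbTE vs).
  case: (v =P o) => [->|/eqP vo].
    by rewrite /phi /phi1 !eqxx (negbTE or) (negbTE os) (negbTE sr); field.
  by rewrite /phi /phi1 (negbTE vr) (negbTE vs) (negbTE vo); field.
- rewrite /net_current (sum_adj_edge _ _ e so) sum_diff sum_phi1 // (negbTE rs) eq_sym (negbTE or).
  by rewrite /phi /phi1 !eqxx; field.
Qed.

Definition inc n (x : 'I_n) (p : 'I_n * 'I_n) : bool := (p.1 == x) || (p.2 == x).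
Definition cnt n (e p : 'I_n * 'I_n) : nat := (inc e.1 p + inc e.2 p)%N.
Definition Ival (R : realFieldType) n (k : nat) : R :=
  let N := (n%:R : R) in
  if k == 0%N then N / 2 else if k == 1%N then N * (N - 2) / (2 * N - 3) else (N - 2) / 2.

Lemma eff_res_cnt (R : realFieldType) n (e p : 'I_n * 'I_n) : (6 <= n)%N ->
  e.1 != e.2 -> p.1 != p.2 ->
  eff_res R (Kn_minus e) p.1 p.2 = (Ival R n (cnt e p))^-1.
Proof.
case: e => a b; case: p => r s /= n6 ab rs.
rewrite /cnt /inc /Ival /=.
have sr : s != r by rewrite eq_sym.
case: (eqVneq a r) => [ear|ar].
  subst a.
  case: (eqVneq b s) => [ebs|bs].
    subst b; simpne; rewrite ?eqxx /=.
    have e : (r == r) && (s == s) || (r == s) && (s == r) by rewrite !eqxx.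
    by rewrite (eff_res_eq rs (pot_C2 R n6 rs e).1) (pot_C2 R n6 rs e).2.
  have br : b != r by rewrite eq_sym.
  simpne; rewrite ?eqxx /=.
  have e : (r == r) && (b == b) || (r == b) && (b == r) by rewrite !eqxx.
  by rewrite (eff_res_eq rs (pot_C1r R n6 rs e br bs).1) (pot_C1r R n6 rs e br bs).2.
case: (eqVneq a s) => [eas|as_].
  subst a.
  case: (eqVneq b r) => [ebr|br].
    subst b; simpne; rewrite ?eqxx /=.
    have e : (s == r) && (r == s) || (s == s) && (r == r) by rewrite !eqxx orbT.
    by rewrite (eff_res_eq rs (pot_C2 R n6 rs e).1) (pot_C2 R n6 rs e).2.
  have bs : b != s by rewrite eq_sym.
  simpne; rewrite ?eqxx /=.
  have e : (s == s) && (b == b) || (s == b) && (b == s) by rewrite !eqxx.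
  by rewrite (eff_res_eq rs (pot_C1s R n6 rs e br bs).1) (pot_C1s R n6 rs e br bs).2.
case: (eqVneq b r) => [ebr|br].
  subst b; simpne; rewrite ?eqxx /=.
  have e : (a == r) && (r == a) || (a == a) && (r == r) by rewrite !eqxx orbT.
  by rewrite (eff_res_eq rs (pot_C1r R n6 rs e ar as_).1) (pot_C1r R n6 rs e ar as_).2.
case: (eqVneq b s) => [ebs|bs].
  subst b; simpne; rewrite ?eqxx /=.
  have e : (a == s) && (s == a) || (a == a) && (s == s) by rewrite !eqxx orbT.
  by rewrite (eff_res_eq rs (pot_C1s R n6 rs e ar as_).1) (pot_C1s R n6 rs e ar as_).2.
simpne; rewrite /=.
by rewrite (eff_res_eq rs (pot_C0 R n6 rs ab ar as_ br bs).1) (pot_C0 R n6 rs ab ar as_ br bs).2.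
Qed.

Lemma Ival_inj (R : realFieldType) n (k l : nat) : (6 <= n)%N -> (k <= 2)%N -> (l <= 2)%N ->
  (Ival R n k)^-1 = (Ival R n l)^-1 -> k = l.
Proof.
move=> n6 k2 l2 /invr_inj; have N6 := natR6 R n6; rewrite /Ival.
have D : 2 * (n%:R : R) - 3 != 0 by apply/eqP; lra.
have two : (2 : R) != 0 by apply/eqP; lra.
have E1 : (n%:R : R) / 2 != n%:R * (n%:R - 2) / (2 * n%:R - 3).
  rewrite eqr_div //; apply/eqP; nra.
have E2 : ((n%:R : R) - 2) / 2 != n%:R * (n%:R - 2) / (2 * n%:R - 3).
  rewrite eqr_div //; apply/eqP; nra.
have E3 : (n%:R : R) / 2 != (n%:R - 2) / 2.
  rewrite eqr_div //; apply/eqP; nra.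
move: k2 l2.
case: k => [|[|[|k]]] // _; case: l => [|[|[|l]]] //= _ h; exfalso.
all: move: h; apply/eqP.
- exact: E1.
- exact: E3.
- by rewrite eq_sym.
- by rewrite eq_sym.
- by rewrite eq_sym.
- exact: E2.
Qed.

Local Close Scope ring_scope.

Definition sepc n (S : {set 'I_n * 'I_n}) : Prop :=
  forall e e' : 'I_n * 'I_n, Kn_edge e -> Kn_edge e' -> e != e' ->
    exists2 p, p \in S & cnt e p != cnt e' p.

Lemma ord_lt_neq n (x y : 'I_n) : (x < y)%N -> x != y.
Proof. by move=> h; rewrite neq_ltn h. Qed.

Lemma cnt_le2 n (e p : 'I_n * 'I_n) : (cnt e p <= 2)%N.
Proof. by rewrite /cnt; case: (inc _ _); case: (inc _ _). Qed.

Lemma solves_sep (R : realFieldType) n (S : {set 'I_n * 'I_n}) : (6 <= n)%N ->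
  solves R S -> sepc S.
Proof.
move=> n6 [H1 H2] e e' He He' ne; have [p pS hp] := H2 e e' He He' ne.
exists p => //; apply/eqP => E; move: hp.
have p12 : p.1 != p.2 by apply: ord_lt_neq; apply: H1.
have e12 : e.1 != e.2 by apply: ord_lt_neq.
have e12' : e'.1 != e'.2 by apply: ord_lt_neq.
by rewrite !eff_res_cnt // E eqxx.
Qed.

Lemma sep_solves (R : realFieldType) n (S : {set 'I_n * 'I_n}) : (6 <= n)%N ->
  (forall p, p \in S -> (p.1 < p.2)%N) -> sepc S -> solves R S.
Proof.
move=> n6 H1 H2; split => // e e' He He' ne; have [p pS hp] := H2 e e' He He' ne.
exists p => //; apply/eqP => E; move: hp.
have p12 : p.1 != p.2 by apply: ord_lt_neq; apply: H1.
have e12 : e.1 != e.2 by apply: ord_lt_neq.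
have e12' : e'.1 != e'.2 by apply: ord_lt_neq.
move: E; rewrite !eff_res_cnt // => /Ival_inj -> //; first by rewrite eqxx.
all: exact: cnt_le2.
Qed.


Definition mk n (x y : 'I_n) : 'I_n * 'I_n := if (x < y)%N then (x, y) else (y, x).

Lemma mk_edge n (x y : 'I_n) : x != y -> Kn_edge (mk x y).
Proof.
rewrite /mk /Kn_edge; case: (ltnP x y) => // h xy.
rewrite [X in is_true X]ltn_neqAle h andbT.
by apply: contra xy => /eqP e; apply/eqP; apply: val_inj.
Qed.

Lemma mk_cnt n (x y : 'I_n) p : cnt (mk x y) p = (inc x p + inc y p)%N.
Proof. by rewrite /mk; case: ifP => _; rewrite /cnt //= addnC. Qed.

Lemma mk_eq n (x y x' y' : 'I_n) : mk x y = mk x' y' ->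
  (x == x') && (y == y') || (x == y') && (y == x').
Proof.
rewrite /mk; case: ifP => _; case: ifP => _ [-> ->]; by rewrite !eqxx ?orbT.
Qed.

Lemma sep_sym n (S : {set 'I_n * 'I_n}) : sepc S -> forall x y x' y' : 'I_n,
  x != y -> x' != y' -> ~~ ((x == x') && (y == y') || (x == y') && (y == x')) ->
  exists2 p, p \in S & (inc x p + inc y p != inc x' p + inc y' p)%N.
Proof.
move=> H x y x' y' xy xy' ne.
have ne' : mk x y != mk x' y' by apply/eqP => /mk_eq h; move: ne; rewrite h.
have [p pS h] := H _ _ (mk_edge xy) (mk_edge xy') ne'.
by exists p; rewrite // -!mk_cnt.
Qed.

Lemma sep_F1 n (S : {set 'I_n * 'I_n}) : (3 <= n)%N -> sepc S -> forall x y : 'I_n,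
  x != y -> exists2 p, p \in S & inc x p != inc y p.
Proof.
move=> n3 H x y xy.
have : (0 < #|~: [set x; y]|)%N.
  rewrite cardsCs card_ord setCK cards2 xy; lia.
case/card_gt0P => z; rewrite !inE negb_or => /andP[zx zy].
have xz : x != z by rewrite eq_sym.
have yz : y != z by rewrite eq_sym.
have [|p pS h] := sep_sym H xz yz.
  by rewrite (negbTE xy) /= (negbTE xz).
by exists p => //; apply: contra h => /eqP ->.
Qed.


Definition deg n (S : {set 'I_n * 'I_n}) (x : 'I_n) : nat := #|[set p in S | inc x p]|.

Lemma deg_sum n (S : {set 'I_n * 'I_n}) x : deg S x = \sum_(p in S) (inc x p : nat).
Proof.
rewrite /deg -sum1_card (eq_bigl (fun p => (p \in S) && inc x p)); last by move=> p; rewrite inE.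
by rewrite big_mkcondr /=; apply: eq_bigr => p _; case: (inc x p).
Qed.

Lemma sum_if1n n (j : 'I_n) (F : 'I_n -> nat) : \sum_i (if i == j then F i else 0)%N = F j.
Proof. by rewrite -big_mkcond big_pred1_eq. Qed.

Lemma dc n (S : {set 'I_n * 'I_n}) (w : 'I_n -> nat) : (forall p, p \in S -> p.1 != p.2) ->
  \sum_x w x * deg S x = \sum_(p in S) (w p.1 + w p.2).
Proof.
move=> H.
rewrite (eq_bigr (fun x => \sum_(p in S) w x * inc x p)); last first.
  by move=> x _; rewrite deg_sum big_distrr.
rewrite exchange_big /=; apply: eq_bigr => p pS.
rewrite (eq_bigr (fun x => (if x == p.1 then w x else 0) + (if x == p.2 then w x else 0)))%N.
  by rewrite big_split /= !sum_if1n.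
move=> x _; rewrite /inc (eq_sym x p.1) (eq_sym x p.2); have := H p pS.
case: (p.1 =P x) => [e1|n1]; case: (p.2 =P x) => [e2|n2] //=.
- by rewrite e1 e2 eqxx.
- by rewrite muln1 addn0.
- by rewrite muln1.
- by rewrite muln0.
Qed.

Lemma deg0 n (S : {set 'I_n * 'I_n}) x p : deg S x = 0%N -> p \in S -> inc x p = false.
Proof.
move=> /cards0_eq E pS; apply/negP => h.
have : p \in [set p in S | inc x p] by rewrite inE pS h.
by rewrite E inE.
Qed.

Lemma deg_pos n (S : {set 'I_n * 'I_n}) x p : p \in S -> inc x p -> (0 < deg S x)%N.
Proof. by move=> pS h; apply/card_gt0P; exists p; rewrite inE pS h. Qed.

Lemma deg1_uniq n (S : {set 'I_n * 'I_n}) x p q : deg S x = 1%N ->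
  p \in S -> inc x p -> q \in S -> inc x q -> p = q.
Proof.
move=> d pS hp qS hq; have : (#|[set p in S | inc x p]| <= 1)%N by rewrite -/(deg S x) d.
by move/card_le1_eqP; apply; rewrite inE ?pS ?hp ?qS ?hq.
Qed.

Lemma inc1 n (p : 'I_n * 'I_n) : inc p.1 p. Proof. by rewrite /inc eqxx. Qed.
Lemma inc2 n (p : 'I_n * 'I_n) : inc p.2 p. Proof. by rewrite /inc eqxx orbT. Qed.

Lemma factA n (S : {set 'I_n * 'I_n}) x y : (3 <= n)%N -> sepc S ->
  deg S x = 0%N -> deg S y = 0%N -> x = y.
Proof.
move=> n3 H dx dy; apply/eqP; apply/negPn/negP => xy.
have [p pS] := sep_F1 n3 H xy.
by rewrite (deg0 dx pS) (deg0 dy pS).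
Qed.

Lemma factB n (S : {set 'I_n * 'I_n}) p : (3 <= n)%N -> sepc S ->
  (forall p, p \in S -> (p.1 < p.2)%N) ->
  p \in S -> deg S p.1 = 1%N -> deg S p.2 = 1%N -> False.
Proof.
move=> n3 H HS pS d1 d2.
have [q qS] := sep_F1 n3 H (ord_lt_neq (HS p pS)).
case h1: (inc p.1 q); case h2: (inc p.2 q) => //= _.
- by rewrite -(deg1_uniq d1 pS (inc1 p) qS h1) inc2 in h2.
- by rewrite -(deg1_uniq d2 pS (inc2 p) qS h2) inc1 in h1.
Qed.

Definition oth n (w : 'I_n) (p : 'I_n * 'I_n) := if p.1 == w then p.2 else p.1.

Lemma oth_inc n (w : 'I_n) p y : p.1 != p.2 -> inc w p ->
  inc y p = (y == w) || (y == oth w p).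
Proof.
rewrite /inc /oth => p12 /orP[]/eqP e; subst w.
- by rewrite eqxx (eq_sym p.1) (eq_sym p.2).
- by rewrite (negbTE p12) (eq_sym p.1) (eq_sym p.2) orbC.
Qed.

Lemma oth_neq n (w : 'I_n) p : p.1 != p.2 -> inc w p -> oth w p != w.
Proof.
rewrite /inc /oth => p12 /orP[]/eqP e; subst w.
- by rewrite eqxx eq_sym.
- by rewrite (negbTE p12).
Qed.

Lemma factC n (S : {set 'I_n * 'I_n}) x w : (3 <= n)%N -> sepc S ->
  (forall p, p \in S -> (p.1 < p.2)%N) ->
  deg S x = 0%N -> deg S w = 2%N ->
  (forall p, p \in S -> inc w p -> ~~ ((2 <= deg S p.1) && (2 <= deg S p.2))%N) -> False.
Proof.
move=> n3 H HS dx dw hM.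
have /cards2P [p1 [p2 [p12 E]]] : #|[set p in S | inc w p]| == 2%N by rewrite -/(deg S w) dw.
have m1 : p1 \in [set p in S | inc w p] by rewrite E !inE eqxx.
have m2 : p2 \in [set p in S | inc w p] by rewrite E !inE eqxx orbT.
move: (m1) (m2); rewrite !inE => /andP[p1S w1] /andP[p2S w2].
have ne1 := ord_lt_neq (HS p1 p1S); have ne2 := ord_lt_neq (HS p2 p2S).
have leaf : forall p, p \in S -> inc w p -> deg S (oth w p) = 1%N.
  move=> p pS wp; have ne := ord_lt_neq (HS p pS).
  have pos : (0 < deg S (oth w p))%N.
    by apply: (deg_pos pS); rewrite (oth_inc _ ne wp) eqxx orbT.
  suff : ~~ (2 <= deg S (oth w p))%N by lia.
  apply: contra (hM p pS wp) => h; move: h wp; rewrite /oth /inc.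
  case: (p.1 =P w) => [e|/eqP e] h /=.
    by rewrite e dw h.
  by move=> /eqP e2; rewrite e2 dw h.
set u := oth w p1; set v := oth w p2.
have du : deg S u = 1%N by apply: leaf.
have dv : deg S v = 1%N by apply: leaf.
have iu1 : inc u p1 by rewrite (oth_inc _ ne1 w1) eqxx orbT.
have iv2 : inc v p2 by rewrite (oth_inc _ ne2 w2) eqxx orbT.
have uv : u != v.
  apply/eqP => e; move: p12; rewrite (deg1_uniq du p1S iu1 p2S) ?eqxx //.
  by rewrite e.
have incu : forall q, q \in S -> inc u q = (q == p1).
  move=> q qS; apply/idP/eqP => [h|->] //.
  by rewrite (deg1_uniq du qS h p1S iu1).
have incv : forall q, q \in S -> inc v q = (q == p2).
  move=> q qS; apply/idP/eqP => [h|->] //.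
  by rewrite (deg1_uniq dv qS h p2S iv2).
have incw : forall q, q \in S -> inc w q = (q == p1) || (q == p2).
  move=> q qS; have : (q \in [set p in S | inc w p]) = (q \in [set p1; p2]) by rewrite E.
  by rewrite !inE qS.
have wx : w != x by apply/eqP => e; move: dw; rewrite e dx.
have uw : u != w by apply: oth_neq.
have ux : u != x by apply/eqP => e; move: du; rewrite e dx.
have [|q qS] := sep_sym H uv wx; first by rewrite (negbTE uw) (negbTE ux).
rewrite incu // incv // incw // (deg0 dx qS).
by case: (q =P p1) => [e|_]; case: (q =P p2) => [e'|_] //; move: p12; rewrite -e -e' eqxx.
Qed.

Lemma sum_b_card n (P : pred 'I_n) : \sum_x (P x : nat) = #|[set x | P x]|.
Proof.
rewrite -sum1_card [RHS]big_mkcond; apply: eq_bigr => x _; rewrite inE; by case: (P x).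
Qed.

Lemma sum_b_cardS n (S : {set 'I_n * 'I_n}) (P : pred ('I_n * 'I_n)) :
  \sum_(p in S) (P p : nat) = #|[set p in S | P p]|.
Proof.
rewrite -sum1_card [RHS]big_mkcond [LHS]big_mkcond; apply: eq_bigr => p _; rewrite inE.
by case: (p \in S); case: (P p).
Qed.

Lemma lower n (S : {set 'I_n * 'I_n}) : (6 <= n)%N ->
  (forall p, p \in S -> (p.1 < p.2)%N) -> sepc S -> ((2 * n).+2 %/ 3 <= #|S|)%N.
Proof.
move=> n6 HS H; have n3 : (3 <= n)%N by lia.
have HS' : forall p, p \in S -> p.1 != p.2 by move=> p pS; apply: ord_lt_neq; apply: HS.
set d := deg S.
set nI := \sum_x (d x == 0%N : nat).
set nL := \sum_x (d x == 1%N : nat).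
set nM := \sum_x ((2 <= d x)%N : nat).
set MM := fun p : 'I_n * 'I_n => ((2 <= d p.1) && (2 <= d p.2))%N.
set mm := \sum_(p in S) (MM p : nat).
set D := \sum_x ((2 <= d x)%N * (d x - 2))%N.
set SM := \sum_x ((2 <= d x)%N * d x)%N.
have Hv : n = (nI + nL + nM)%N.
  rewrite -{1}[n]card_ord -sum1_card /nI /nL /nM -!big_split /=.
  by apply: eq_bigr => x _; lia.
have HI : (nI <= 1)%N.
  rewrite /nI sum_b_card; apply/card_le1_eqP => x y; rewrite !inE => /eqP dx /eqP dy.
  exact: (factA n3 H dy dx).
have Hp : forall p, p \in S -> [/\ (0 < d p.1)%N, (0 < d p.2)%N &
                                  ~~ ((d p.1 == 1%N) && (d p.2 == 1%N))].
  move=> p pS; split.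
  - exact: (deg_pos pS (inc1 p)).
  - exact: (deg_pos pS (inc2 p)).
  - by apply/negP => /andP[/eqP h1 /eqP h2]; apply: (factB n3 H HS pS h1 h2).
have Hi : #|S| = (nL + mm)%N.
  have -> : nL = \sum_x ((d x == 1%N) * d x)%N.
    by apply: eq_bigr => x _; case: (eqVneq (d x) 1%N) => [->|]; rewrite ?muln0 ?muln1.
  rewrite (dc (fun x => (d x == 1%N : nat)) HS') /mm -big_split -sum1_card /=.
  apply: eq_bigr => p pS; have [] := Hp p pS; rewrite /MM; move: (d p.1) (d p.2) => a b; lia.
have Hii : SM = (nL + 2 * mm)%N.
  rewrite /SM (dc (fun x => ((2 <= d x)%N : nat)) HS').
  have -> : nL = \sum_(p in S) ((d p.1 == 1%N) + (d p.2 == 1%N))%N.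
    have -> : nL = \sum_x ((d x == 1%N) * d x)%N.
      by apply: eq_bigr => x _; case: (eqVneq (d x) 1%N) => [->|]; rewrite ?muln0 ?muln1.
    by rewrite (dc (fun x => (d x == 1%N : nat)) HS').
  rewrite /mm big_distrr -big_split /=.
  apply: eq_bigr => p pS; have [] := Hp p pS; rewrite /MM; move: (d p.1) (d p.2) => a b; lia.
have Hiii : SM = (D + 2 * nM)%N.
  by rewrite /SM /D /nM big_distrr -big_split /=; apply: eq_bigr => x _; lia.
have Hiv : (0 < nI)%N -> (nM <= D + 2 * mm)%N.
  rewrite /nI sum_b_card => /card_gt0P [x0]; rewrite inE => /eqP dx0.
  set S' := [set p in S | MM p].
  have HS2 : forall p, p \in S' -> p.1 != p.2 by move=> p; rewrite inE => /andP[/HS' ? _].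
  have -> : (2 * mm)%N = \sum_x (1 * deg S' x)%N.
    rewrite (dc (fun _ => 1%N) HS2) /mm sum_b_cardS -sum1_card big_distrr /=.
    by apply: eq_bigr.
  rewrite /D /nM -big_split /=; apply: leq_sum => x _.
  case: (ltngtP (d x) 2) => h; try lia.
  rewrite h subnn muln0 mul1n add0n; apply/card_gt0P.
  case: (boolP [exists p, p \in [set p in S' | inc x p]]) => [/existsP //|]; rewrite negb_exists => /forallP nx; exfalso.
  apply: (factC n3 H HS dx0 h) => p pS wp; apply/negP => mp.
  by move: (nx p); rewrite !inE pS wp andbT /= /MM mp.
case: (posnP nI) => hI.
  suff : (2 * n <= 3 * #|S|)%N by lia.
  lia.
have := Hiv hI; lia.
Qed.


Definition memp n (a b x : 'I_n) : bool := (x == a) || (x == b).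

Lemma star_one n (c : 'I_n -> 'I_n) (a b a' b' z : 'I_n) :
  (forall v, c (c v) = c v) ->
  (forall z, c z = z -> exists l1 l2, [/\ l1 != l2, c l1 = z, c l2 = z, l1 != z & l2 != z]) ->
  (forall v, c v != v -> (memp a b v + memp a b (c v) = memp a' b' v + memp a' b' (c v))%N) ->
  a' != b' -> c z = z -> memp a b z = false -> memp a' b' z = true -> False.
Proof.
move=> Hc H2 Hy ab' cz mz mz'.
have L : forall v, c v = z -> v != z -> memp a b v /\ ~~ memp a' b' v.
  move=> v cv vz; have := Hy v; rewrite cv mz mz'.
  have cvv : z != v by rewrite eq_sym.
  move=> /(_ cvv); case: (memp a b v); case: (memp a' b' v) => //=.
have [l1 [l2 [l12 c1 c2 l1z l2z]]] := H2 z cz.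
have [m1 _] := L l1 c1 l1z; have [m2 _] := L l2 c2 l2z.
have Hab : forall x, memp a b x -> c x = z.
  move: m1 m2; rewrite /memp => m1 m2 x.
  case/orP: m1 => /eqP e1; case/orP: m2 => /eqP e2; subst; try by rewrite eqxx in l12.
  - by case/orP => /eqP ->.
  - by case/orP => /eqP ->.
set y := if z == a' then b' else a'.
have my : memp a' b' y by rewrite /y /memp; case: ifP; rewrite eqxx ?orbT.
have yz : y != z.
  rewrite /y; case: (eqVneq z a') => [->|za] /=; first by rewrite eq_sym.
  by rewrite eq_sym.
case: (c y =P y) => [cy|/eqP cy].
  have [l [l' [_ cl _ ly _]]] := H2 y cy.
  have cll : c l != l by rewrite cl eq_sym.
  have := Hy l cll; rewrite cl my addn1.
  case h1: (memp a b l); first by move: (Hab l h1); rewrite cl => e; rewrite e eqxx in yz.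
  case h2: (memp a b y); first by move: (Hab y h2); rewrite cy => e; rewrite e eqxx in yz.
  by [].
have := Hy y cy; rewrite my.
case h1: (memp a b y).
  have cyz : c y = z by apply: Hab.
  by have [_] := L y cyz yz; rewrite my.
case h2: (memp a b (c y)) => //.
have cyz : c y = z by rewrite -(Hab _ h2) Hc.
by have [_] := L y cyz yz; rewrite my.
Qed.

Lemma star_main n (c : 'I_n -> 'I_n) (a b a' b' : 'I_n) :
  (forall v, c (c v) = c v) ->
  (forall z, c z = z -> exists l1 l2, [/\ l1 != l2, c l1 = z, c l2 = z, l1 != z & l2 != z]) ->
  (forall v, c v != v -> (memp a b v + memp a b (c v) = memp a' b' v + memp a' b' (c v))%N) ->
  a != b -> a' != b' -> forall x, memp a b x = memp a' b' x.
Proof.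
move=> Hc H2 Hy ab ab'.
have Cz : forall z, c z = z -> memp a b z = memp a' b' z.
  move=> z cz; case h1: (memp a b z); case h2: (memp a' b' z) => //.
  - exfalso; apply: (star_one (a := a') (b := b') (a' := a) (b' := b) Hc H2 _ ab cz h2 h1).
    by move=> v cv; rewrite Hy.
  - exfalso; exact: (star_one Hc H2 Hy ab' cz h1 h2).
move=> x; case: (c x =P x) => [cx|/eqP cx]; first exact: Cz.
have := Hy x cx; rewrite (Cz (c x) (Hc x)).
by case: (memp a b x); case: (memp a' b' x); case: (memp a' b' (c x)).
Qed.

Lemma memp_edge n (e e' : 'I_n * 'I_n) : Kn_edge e -> Kn_edge e' ->
  (forall x, memp e.1 e.2 x = memp e'.1 e'.2 x) -> e = e'.
Proof.
case: e => a b; case: e' => a' b'; rewrite /Kn_edge /= => ab ab' H.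
have ha := H a; have hb := H b; have ha' := H a'; have hb' := H b'.
move: ha hb ha' hb'; rewrite /memp !eqxx ?orbT /=.
move=> /esym /orP[] /eqP e1 /esym /orP[] /eqP e2 /orP[] /eqP e3 /orP[] /eqP e4; subst;
  try by [] ; try lia.
Qed.

Lemma cnt_memp n (a b v w : 'I_n) : a != b -> w != v ->
  cnt (a, b) (w, v) = (memp a b v + memp a b w)%N.
Proof.
move=> ab wv; rewrite /cnt /inc /memp /=.
case: (w =P a) => [e1|/eqP n1]; case: (v =P a) => [e2|/eqP n2];
case: (w =P b) => [e3|/eqP n3]; case: (v =P b) => [e4|/eqP n4] => //=;
  subst; try neqxx.
Qed.

Lemma star_sep n (c : 'I_n -> 'I_n) :
  (forall v, c (c v) = c v) ->
  (forall z, c z = z -> exists l1 l2, [/\ l1 != l2, c l1 = z, c l2 = z, l1 != z & l2 != z]) ->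
  sepc [set (c v, v) | v in [set v | c v != v]].
Proof.
move=> Hc H2 [a b] [a' b'] He He' ne.
case: (boolP [exists v, (c v != v) && (cnt (a,b) (c v, v) != cnt (a',b') (c v, v))]).
  case/existsP => v /andP[cv h]; exists (c v, v) => //; apply/imsetP; exists v => //.
  by rewrite inE.
rewrite negb_exists => /forallP Hn; exfalso; move/eqP: ne; apply.
have ab := ord_lt_neq He; have ab' := ord_lt_neq He'.
apply: memp_edge (He) (He') _.
apply: star_main Hc H2 _ (ab) (ab') => v cv.
have := Hn v; rewrite cv /= negbK => /eqP.
by rewrite !cnt_memp.
Qed.

Definition cf n (v : nat) : nat := (3 * minn (v %/ 3) (n %/ 3 - 1))%N.
Definition cc n (v : 'I_n) : 'I_n := insubd v (cf n v).

Lemma cc_val n (v : 'I_n) : (6 <= n)%N -> nat_of_ord (cc v) = cf n v.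
Proof.
move=> n6; change (val (cc v) = cf n v); rewrite val_insubd; have -> : (cf n v < n)%N by rewrite /cf; lia.
by [].
Qed.

Lemma cc_idem n (v : 'I_n) : (6 <= n)%N -> cc (cc v) = cc v.
Proof. by move=> n6; apply: val_inj => /=; rewrite !cc_val // /cf; lia. Qed.

Lemma cc_lt n (v : 'I_n) : (6 <= n)%N -> cc v != v -> (cc v < v)%N.
Proof.
move=> n6 h; have : nat_of_ord (cc v) != nat_of_ord v by [].
by rewrite cc_val // /cf; have := ltn_ord v; lia.
Qed.

Lemma cc_leaves n (z : 'I_n) : (6 <= n)%N -> cc z = z ->
  exists l1 l2, [/\ l1 != l2, cc l1 = z, cc l2 = z, l1 != z & l2 != z].
Proof.
move=> n6 /(congr1 val) => /=; rewrite cc_val // => hz.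
have h1 : (z + 1 < n)%N by move: hz; rewrite /cf; lia.
have h2 : (z + 2 < n)%N by move: hz; rewrite /cf; lia.
exists (Ordinal h1), (Ordinal h2); split.
- by rewrite -val_eqE /=; lia.
- by apply: val_inj => /=; rewrite cc_val //= /cf; move: hz; rewrite /cf; lia.
- by apply: val_inj => /=; rewrite cc_val //= /cf; move: hz; rewrite /cf; lia.
- by rewrite -val_eqE /=; lia.
- by rewrite -val_eqE /=; lia.
Qed.

Lemma construction n : (6 <= n)%N -> exists S : {set 'I_n * 'I_n},
  [/\ (forall p, p \in S -> (p.1 < p.2)%N), sepc S & (#|S| <= n - n %/ 3)%N].
Proof.
move=> n6.
exists [set (cc v, v) | v in [set v | cc v != v]]; split.
- move=> p /imsetP [v]; rewrite inE => cv ->; exact: cc_lt.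
- apply: star_sep => [v|z]; [exact: cc_idem | exact: cc_leaves].
apply: (leq_trans (leq_imset_card _ _)).
have n0 : (0 < n)%N by lia.
pose v0 := Ordinal n0.
pose f := fun j : 'I_(n %/ 3) => insubd v0 (3 * j)%N : 'I_n.
have fv : forall j : 'I_(n %/ 3), val (f j) = (3 * j)%N.
  move=> j; rewrite val_insubd; have -> : (3 * j < n)%N by have := ltn_ord j; lia.
  by [].
have finj : injective f by move=> i j /(congr1 val); rewrite !fv => h; apply: val_inj => /=; lia.
pose C := [set v : 'I_n | cc v == v].
have sub : f @: [set: 'I_(n %/ 3)] \subset C.
  apply/subsetP => v /imsetP [j _ ->]; rewrite inE; apply/eqP; apply: val_inj.
  rewrite /= cc_val // fv /cf; have := ltn_ord j; lia.
have := subset_leq_card sub; rewrite card_imset // cardsT card_ord => hk.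
have hc := cardsC C.
have E : ~: C = [set v : 'I_n | cc v != v].
  by apply/setP => v; rewrite !inE.
rewrite -E; move: hc hk; rewrite cardT size_enum_ord.
move: #|C| #|~: C| => x y; lia.
Qed.


(* ceil(2n/3) = (2n+2) %/ 3 on naturals *)
Theorem theorem2p1 (R : realFieldType) (n : nat) :
  (6 <= n)%N ->
  (exists S : {set 'I_n * 'I_n}, solves R S /\ #|S| = ((2 * n).+2 %/ 3)%N) /\
  (forall S : {set 'I_n * 'I_n}, solves R S -> ((2 * n).+2 %/ 3 <= #|S|)%N).
Proof.
move=> n6; split.
- have [S [HS Hsep Hc]] := construction n6.
  exists S; split; first exact: sep_solves.
  have hb : (n - n %/ 3 = (2 * n).+2 %/ 3)%N by lia.
  apply/eqP; rewrite eqn_leq -hb Hc /= hb; exact: lower.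
- move=> S hS; apply: lower => //; first exact: hS.1.
  exact: solves_sep hS.
Qed.
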